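(* Let $r>0$ and $\sigma>0$, set $k=\frac{2r}{\sigma^2}$, and let $\widetilde{\widetilde{C}}_0:\mathbb{R}\to\mathbb{R}$ be $$\widetilde{\widetilde{C}}_0(x)=\max\left\{e^{\frac{(k+1)x}{2}}-e^{\frac{(k-1)x}{2}},\,0\right\}.$$ Fix $S_0\ge 0$, a positive integer $N_0$, and $\epsilon\in\{-1,1\}$. For $\lambda>0$ define the function $$\mathcal{F}\left(\widetilde{\widetilde{C}}_0,\lambda,N_0\right)(x)=\widetilde{\widetilde{C}}_0(x)+\epsilon\sum_{j=1}^{N_0}\lambda^{-j}\,\widetilde{\widetilde{C}}_0\left(\lambda^{-j}x\right).$$ Then $$\left\|\mathcal{F}\left(\widetilde{\widetilde{C}}_0,\lambda,N_0\right)-\widetilde{\widetilde{C}}_0\right\|^2_{L^2([0,S_0])}\longrightarrow 0\quad\text{as }\lambda\to+\infty,$$ i.e. for every $\varepsilon>0$ there exists $\lambda_0>0$ such that for all $\lambda\ge\lambda_0$ this squared norm is at most $\varepsilon$.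
   Context: $\widetilde{\widetilde{C}}_0$ is the initial datum obtained from the Black–Scholes call payoff after the standard change of variables $x=\ln(S/E)$ transforming the Black–Scholes equation into the heat equation; $r$ is the risk-free rate and $\sigma$ the volatility. $L^2([0,S_0])$ is the usual Lebesgue space on the interval $[0,S_0]$. *)

(* Defs.v *)
From Stdlib Require Import Reals.
From Coquelicot Require Import Coquelicot.
Open Scope R_scope.

Definition kBS (r sigma : R) : R := 2 * r / sigma ^ 2.

Definition C0 (r sigma : R) (x : R) : R :=
  Rmax (exp ((kBS r sigma + 1) * x / 2) - exp ((kBS r sigma - 1) * x / 2)) 0.

(* F(C0, lambda, N0)(x) = C0(x) + eps * sum_{j=1}^{N0} lambda^{-j} C0(lambda^{-j} x)
   (sum_f 1 N0 f = f 1 + ... + f N0 for N0 >= 1) *)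
Definition Fpert (r sigma eps lam : R) (N0 : nat) (x : R) : R :=
  C0 r sigma x
  + eps * sum_f 1 N0 (fun j => / lam ^ j * C0 r sigma (/ lam ^ j * x)).

Definition L2sq (S0 : R) (f : R -> R) : R := RInt (fun x => (f x) ^ 2) 0 S0.

(* Main.v *)
Require Import Defs.
From Stdlib Require Import Reals Lra Lia.
From Coquelicot Require Import Coquelicot.
Open Scope R_scope.

Lemma Rmax0_eq (a : R) : Rmax a 0 = (a + Rabs a) / 2.
Proof. unfold Rmax, Rabs; destruct (Rle_dec a 0); destruct (Rcase_abs a); lra. Qed.

Lemma C0_cont (r sigma y : R) : continuous (C0 r sigma) y.
Proof.
  apply continuous_ext with
    (f := fun x => ((exp ((kBS r sigma + 1) * x / 2) - exp ((kBS r sigma - 1) * x / 2))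
                    + Rabs (exp ((kBS r sigma + 1) * x / 2) - exp ((kBS r sigma - 1) * x / 2))) / 2).
  { intro x; unfold C0; now rewrite Rmax0_eq. }
  assert (H : continuous (fun x => exp ((kBS r sigma + 1) * x / 2) - exp ((kBS r sigma - 1) * x / 2)) y).
  { apply (continuous_plus (fun x => exp ((kBS r sigma + 1) * x / 2))
                           (fun x => - exp ((kBS r sigma - 1) * x / 2))).
    - apply continuous_exp_comp.
      apply (continuous_mult (fun x => (kBS r sigma + 1) * x) (fun _ => / 2)).
      + apply (continuous_mult (fun _ => kBS r sigma + 1) (fun x => x)).
        apply continuous_const. apply continuous_id.
      + apply continuous_const.
    - apply (continuous_opp (fun x => exp ((kBS r sigma - 1) * x / 2))).
      apply continuous_exp_comp.
      apply (continuous_mult (fun x => (kBS r sigma - 1) * x) (fun _ => / 2)).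
      + apply (continuous_mult (fun _ => kBS r sigma - 1) (fun x => x)).
        apply continuous_const. apply continuous_id.
      + apply continuous_const. }
  apply (continuous_mult (fun x => (exp ((kBS r sigma + 1) * x / 2) - exp ((kBS r sigma - 1) * x / 2))
                    + Rabs (exp ((kBS r sigma + 1) * x / 2) - exp ((kBS r sigma - 1) * x / 2))) (fun _ => / 2)).
  - apply (continuous_plus _ (fun x => Rabs (exp ((kBS r sigma + 1) * x / 2) - exp ((kBS r sigma - 1) * x / 2)))).
    exact H. apply continuous_Rabs_comp. exact H.
  - apply continuous_const.
Qed.

Lemma sum_cont (g : nat -> R -> R) (z : R) :
  (forall i, continuous (g i) z) ->
  forall n, continuous (fun x => sum_f_R0 (fun i => g i x) n) z.
Proof.
  intros Hg n; induction n as [|n IH]; simpl.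
  - apply Hg.
  - apply (continuous_plus (fun x => sum_f_R0 (fun i => g i x) n) (g (S n))); auto.
Qed.

Lemma sum_bound (f : nat -> R) (c : R) :
  (forall i, 0 <= f i <= c) -> forall n, 0 <= sum_f_R0 f n <= INR (S n) * c.
Proof.
  intros Hf n; induction n as [|n IH].
  - specialize (Hf 0%nat); simpl; lra.
  - change (sum_f_R0 f (S n)) with (sum_f_R0 f n + f (S n)).
    rewrite (S_INR (S n)). specialize (Hf (S n)). lra.
Qed.

Theorem proposition1 (r sigma S0 eps : R) (N0 : nat) :
  0 < r -> 0 < sigma -> 0 <= S0 -> (0 < N0)%nat -> (eps = 1 \/ eps = -1) ->
  forall e : R, 0 < e ->
  exists lam0 : R, 0 < lam0 /\
    forall lam : R, lam0 <= lam ->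
      L2sq S0 (fun x => Fpert r sigma eps lam N0 x - C0 r sigma x) <= e.
Proof.
  intros Hr Hs HS0 HN Heps e He.
  set (k := kBS r sigma).
  assert (Hk : 0 < k).
  { unfold k, kBS. apply Rdiv_lt_0_compat. lra. apply pow_lt; lra. }
  set (M := exp ((k + 1) * S0 / 2)).
  assert (HM : 0 < M) by apply exp_pos.
  set (K := INR (S (N0 - 1)) * M).
  assert (HK : 0 <= K).
  { unfold K. apply Rmult_le_pos. apply pos_INR. lra. }
  exists (1 + S0 * K ^ 2 / e). split.
  { assert (0 <= S0 * K ^ 2 / e). { apply Rdiv_le_0_compat. apply Rmult_le_pos; auto. apply pow2_ge_0. lra. } lra. }
  intros lam Hlam.
  assert (Hq : 0 <= S0 * K ^ 2 / e). { apply Rdiv_le_0_compat. apply Rmult_le_pos; auto. apply pow2_ge_0. lra. }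
  assert (Hl1 : 1 <= lam) by lra.
  assert (Hlp : 0 < lam) by lra.
  assert (HC : forall y, 0 <= y <= S0 -> 0 <= C0 r sigma y <= M).
  { intros y Hy. unfold C0. rewrite Rmax0_eq. fold k.
    set (a := exp ((k + 1) * y / 2)). set (b := exp ((k - 1) * y / 2)).
    assert (0 < b) by apply exp_pos.
    assert (a <= M).
    { unfold a, M. destruct (Req_dec ((k + 1) * y / 2) ((k + 1) * S0 / 2)) as [E|E].
      rewrite E; lra. left; apply exp_increasing.
      assert ((k + 1) * y <= (k + 1) * S0) by (apply Rmult_le_compat_l; lra). lra. }
    unfold Rabs; destruct (Rcase_abs (a - b)); lra. }
  set (g := fun x => sum_f 1 N0 (fun j => / lam ^ j * C0 r sigma (/ lam ^ j * x))).
  assert (Hg : forall x, 0 <= x <= S0 -> 0 <= g x <= K / lam).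
  { intros x Hx. unfold g, sum_f.
    assert (E : K / lam = INR (S (N0 - 1)) * (M / lam)) by (unfold K, Rdiv; ring).
    rewrite E. apply sum_bound. intro i.
    assert (Hp : lam <= lam ^ (i + 1)).
    { rewrite <- (pow_1 lam) at 1. apply Rle_pow; auto. lia. }
    assert (Hp0 : 0 < lam ^ (i + 1)) by (apply pow_lt; lra).
    assert (Hinv : 0 < / lam ^ (i + 1) <= / lam).
    { split. apply Rinv_0_lt_compat; auto. apply Rinv_le_contravar; lra. }
    assert (Hy : 0 <= / lam ^ (i + 1) * x <= S0).
    { split. apply Rmult_le_pos; lra.
      assert (/ lam ^ (i + 1) <= 1).
      { rewrite <- Rinv_1. apply Rinv_le_contravar; lra. }
      assert (/ lam ^ (i + 1) * x <= 1 * x) by (apply Rmult_le_compat_r; lra). lra. }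
    destruct (HC _ Hy) as [C1 C2].
    split. apply Rmult_le_pos; lra.
    unfold Rdiv. rewrite Rmult_comm.
    apply Rmult_le_compat; lra. }
  unfold L2sq.
  assert (Eint : forall x, (Fpert r sigma eps lam N0 x - C0 r sigma x) ^ 2 = (g x) ^ 2).
  { intro x. unfold Fpert, g. destruct Heps as [-> | ->]; ring. }
  rewrite (RInt_ext _ (fun x => (g x) ^ 2)) by (intros; apply Eint).
  assert (Hcont : forall z, continuous (fun x => (g x) ^ 2) z).
  { intro z.
    assert (Cg : continuous g z).
    { unfold g, sum_f.
      apply (sum_cont (fun i x => / lam ^ (i + 1) * C0 r sigma (/ lam ^ (i + 1) * x))).
      intro i.
      apply (continuous_mult (fun _ => / lam ^ (i + 1)) (fun x => C0 r sigma (/ lam ^ (i + 1) * x))).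
      apply continuous_const.
      apply (continuous_comp (fun x => / lam ^ (i + 1) * x) (C0 r sigma)).
      apply (continuous_mult (fun _ => / lam ^ (i + 1)) (fun x => x)).
      apply continuous_const. apply continuous_id.
      apply C0_cont. }
    apply continuous_ext with (f := fun x => g x * (g x * 1)).
    intro; reflexivity.
    apply (continuous_mult g (fun x => g x * 1)). exact Cg.
    apply (continuous_mult g (fun _ => 1)). exact Cg. apply continuous_const. }
  eapply Rle_trans.
  { apply (RInt_le _ (fun _ => (K / lam) ^ 2)). exact HS0.
    apply (ex_RInt_continuous (V := R_CompleteNormedModule)); intros; apply Hcont.
    apply (ex_RInt_const (V := R_CompleteNormedModule)).
    intros x Hx. destruct (Hg x ltac:(lra)) as [G1 G2].
    apply pow_incr. lra. }
  rewrite RInt_const. unfold scal; simpl; unfold mult; simpl.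
  rewrite Rminus_0_r.
  assert (Hb : S0 * (K / lam) ^ 2 <= S0 * K ^ 2 / lam).
  { assert (E1 : S0 * (K / lam) ^ 2 = (S0 * K ^ 2) * (/ lam * / lam)) by (field; lra).
    assert (E2 : S0 * K ^ 2 / lam = (S0 * K ^ 2) * / lam) by (unfold Rdiv; ring).
    rewrite E1, E2.
    assert (0 <= S0 * K ^ 2) by (apply Rmult_le_pos; auto; apply pow2_ge_0).
    assert (Hi : 0 < / lam <= 1).
    { split. apply Rinv_0_lt_compat; lra. rewrite <- Rinv_1. apply Rinv_le_contravar; lra. }
    apply Rmult_le_compat_l; auto.
    assert (/ lam * / lam <= / lam * 1) by (apply Rmult_le_compat_l; lra). lra. }
  eapply Rle_trans; [exact Hb|].
  assert (HSK : 0 <= S0 * K ^ 2) by (apply Rmult_le_pos; auto; apply pow2_ge_0).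
  apply (Rmult_le_reg_r lam); auto.
  unfold Rdiv. rewrite Rmult_assoc, Rinv_l, Rmult_1_r by lra.
  assert (S0 * K ^ 2 <= e * (S0 * K ^ 2 / e)) by (right; field; lra).
  assert (e * (S0 * K ^ 2 / e) <= e * lam) by (apply Rmult_le_compat_l; lra).
  lra.
Qed.
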